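(* Let $\{c_n\}_{n\ge1}$ be a real sequence with $\sum_{n=1}^\infty|c_n|<+\infty$, and for $n\ge1$ let $\varphi_*^{(n)}(x):=\varphi^{(n)}(x)-\frac12$, $x\in[0,1]$. Let $a<b$ be positive integers. Then for every real $\lambda$, $$\int_0^1\exp\left(\lambda\max_{a\le N\le b}\left|\sum_{n=N}^\infty c_n\varphi_*^{(n)}(x)\right|\right)dx\le 8\exp\left\{\frac{\lambda^2}{2}\sum_{n=a}^\infty (c_n)^2\right\}.$$
   Context: The tent map on $[0,1]$ is $\varphi(x)=2x$ for $x\in[0,1/2]$ and $\varphi(x)=2(1-x)$ for $x\in[1/2,1]$; it is extended to $\mathbb{R}$ by $\varphi(x):=\varphi(x-[x])$, and $\varphi^{(n)}$ denotes the $n$-fold iterate of $\varphi$, so that $\varphi^{(n)}(x)=\varphi(2^{n-1}x)$. *)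

(* Defs.v *)
From Stdlib Require Import Reals Lra Lia List.
From Coquelicot Require Import Coquelicot.
Open Scope R_scope.

Definition frac_part (x : R) : R := x - IZR (Int_part x).

Definition tent (y : R) : R :=
  if Rle_dec y (1/2) then 2 * y else 2 * (1 - y).

Definition phi (x : R) : R := tent (frac_part x).

Definition phi_iter (n : nat) (x : R) : R := Nat.iter n phi x.

Definition phi_star (n : nat) (x : R) : R := phi_iter n x - 1/2.

Definition tail_sum (c : nat -> R) (N : nat) (x : R) : R :=
  Series (fun k => c (N + k)%nat * phi_star (N + k)%nat x).

Definition max_range (f : nat -> R) (a b : nat) : R :=
  fold_right Rmax (f a) (map f (seq a (S (b - a)))).

(* Main.v *)
Require Import Defs.
From Stdlib Require Import Reals List.
From Coquelicot Require Import Coquelicot.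
From Stdlib Require Import Lra Lia FunctionalExtensionality.
Require Import Defs.
Open Scope R_scope.


Lemma exp_le (x y : R) : x <= y -> exp x <= exp y.
Proof. intros [H|H]. left; now apply exp_increasing. right; now subst. Qed.

Lemma frac_small (t : R) : 0 <= t < 1 -> frac_part t = t.
Proof.
  intros H. unfold frac_part.
  assert (E : 0%Z = Int_part t) by (apply Int_part_spec; simpl; lra).
  rewrite <- E. simpl. lra.
Qed.

Lemma frac_range (t : R) : 0 <= frac_part t < 1.
Proof. unfold frac_part. destruct (base_Int_part t). lra. Qed.

Lemma frac_shift (t : R) (k : Z) : frac_part (t + IZR k) = frac_part t.
Proof.
  unfold frac_part.
  assert (E : (Int_part t + k)%Z = Int_part (t + IZR k)).
  { apply Int_part_spec. rewrite plus_IZR. destruct (base_Int_part t). lra. }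
  rewrite <- E, plus_IZR. lra.
Qed.

Lemma tent_range (t : R) : 0 <= t <= 1 -> 0 <= tent t <= 1.
Proof. intros H. unfold tent. destruct (Rle_dec t (1/2)); lra. Qed.

Lemma phi_01 (t : R) : 0 <= t <= 1 -> phi t = tent t.
Proof.
  intros H. unfold phi. destruct (Req_dec t 1) as [E|E].
  - subst. assert (F : frac_part 1 = 0).
    { replace 1 with (0 + IZR 1) at 1 by (simpl; lra). rewrite frac_shift.
      apply frac_small; lra. }
    rewrite F. unfold tent.
    destruct (Rle_dec 0 (1/2)); destruct (Rle_dec 1 (1/2)); lra.
  - rewrite frac_small by lra. reflexivity.
Qed.

Lemma phi_range (t : R) : 0 <= phi t <= 1.
Proof. unfold phi. apply tent_range. pose proof (frac_range t). lra. Qed.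

Lemma phi_shift (t : R) (k : Z) : phi (t + IZR k) = phi t.
Proof. unfold phi. now rewrite frac_shift. Qed.

Lemma phi_decomp (t : R) : t = IZR (Int_part t) + frac_part t.
Proof. unfold frac_part. ring. Qed.

Lemma phi_double (t : R) : phi (phi t) = phi (2 * t).
Proof.
  set (f := frac_part t). set (n := Int_part t).
  assert (Ht : t = f + IZR n) by (unfold f, n, frac_part; ring).
  assert (Hf := frac_range t). fold f in Hf.
  assert (P : phi t = tent f) by reflexivity.
  rewrite P. rewrite phi_01 by (apply tent_range; lra).
  rewrite Ht. replace (2 * (f + IZR n)) with (2 * f + IZR (2 * n)) by (rewrite mult_IZR; simpl; ring).
  rewrite phi_shift.
  destruct (Rlt_or_le f (1/2)) as [H|H].
  - rewrite phi_01 by lra. unfold tent.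
    destruct (Rle_dec f (1/2)); [|lra].
    reflexivity.
  - replace (2 * f) with ((2 * f - 1) + IZR 1) by (simpl; ring).
    rewrite phi_shift. rewrite phi_01 by lra. unfold tent.
    destruct (Rle_dec f (1/2)) as [H1|H1];
    destruct (Rle_dec (2*f) (1/2)); destruct (Rle_dec (2*f-1) (1/2));
    destruct (Rle_dec (2*(1-f)) (1/2)); try lra.
Qed.

Lemma phi_iter_S (n : nat) (x : R) : phi_iter (S n) x = phi (2 ^ n * x).
Proof.
  induction n.
  - simpl. f_equal. ring.
  - change (phi_iter (S (S n)) x) with (phi (phi_iter (S n) x)).
    rewrite IHn, phi_double. f_equal. simpl. ring.
Qed.

Lemma tent_le (f : R) : 0 <= f < 1 -> tent f <= 2 * f /\ tent f <= 2 * (1 - f).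
Proof. intros H. unfold tent. destruct (Rle_dec f (1/2)); lra. Qed.

Lemma phi_le_dist (x : R) (k : Z) : phi x <= 2 * Rabs (x - IZR k).
Proof.
  set (f := frac_part x). set (n := Int_part x).
  assert (Ht : x = f + IZR n) by (unfold f, n, frac_part; ring).
  assert (Hf := frac_range x). fold f in Hf.
  assert (P : phi x = tent f) by reflexivity. rewrite P.
  destruct (tent_le f Hf) as [T1 T2].
  destruct (Z.le_gt_cases k n) as [K|K].
  - apply IZR_le in K. rewrite Rabs_right by lra. lra.
  - assert (K' : (n + 1 <= k)%Z) by lia. apply IZR_le in K'. rewrite plus_IZR in K'. simpl in K'.
    rewrite Rabs_left1 by lra. lra.
Qed.

Lemma phi_eq_dist (x : R) : exists k : Z, phi x = 2 * Rabs (x - IZR k).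
Proof.
  set (f := frac_part x). set (n := Int_part x).
  assert (Ht : x = f + IZR n) by (unfold f, n, frac_part; ring).
  assert (Hf := frac_range x). fold f in Hf.
  assert (P : phi x = tent f) by reflexivity. rewrite P.
  unfold tent. destruct (Rle_dec f (1/2)).
  - exists n. rewrite Rabs_right by lra. lra.
  - exists (n + 1)%Z. rewrite plus_IZR. simpl. rewrite Rabs_left1 by lra. lra.
Qed.

Lemma phi_lip (u v : R) : Rabs (phi u - phi v) <= 2 * Rabs (u - v).
Proof.
  destruct (phi_eq_dist u) as [ku Hu]. destruct (phi_eq_dist v) as [kv Hv].
  pose proof (phi_le_dist u kv). pose proof (phi_le_dist v ku).
  pose proof (Rabs_triang (u - v) (v - IZR kv)).
  pose proof (Rabs_triang (v - u) (u - IZR ku)).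
  replace (u - v + (v - IZR kv)) with (u - IZR kv) in * by ring.
  replace (v - u + (u - IZR ku)) with (v - IZR ku) in * by ring.
  rewrite (Rabs_minus_sym v u) in H2.
  apply Rabs_le. lra.
Qed.



Definition Per (h : R) (f : R -> R) := forall x, f (x + h) = f x.

Lemma two_pow_pos (n : nat) : 0 < 2 ^ n.
Proof. apply pow_lt; lra. Qed.

Lemma ps_per (j n : nat) : (j < n)%nat -> Per (/ 2 ^ j) (phi_star n).
Proof.
  intros Hjn x. unfold phi_star.
  destruct n as [|n]; [lia|].
  rewrite !phi_iter_S.
  assert (n = j + (n - j))%nat as E by lia.
  set (d := (n - j)%nat) in *.
  assert (H2 : 2 ^ n * (x + / 2 ^ j) = 2 ^ n * x + IZR (Z.of_nat (2 ^ d))).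
  { rewrite <- INR_IZR_INZ, pow_INR. replace (INR 2) with 2 by (simpl; ring).
    rewrite E, pow_add. pose proof (two_pow_pos j). field. lra. }
  rewrite H2, phi_shift. reflexivity.
Qed.

Lemma Per_nat (h : R) (f : R -> R) (n : nat) : Per h f -> forall x, f (x + INR n * h) = f x.
Proof.
  intros P x. induction n.
  - simpl. f_equal. ring.
  - rewrite S_INR. replace (x + (INR n + 1) * h) with ((x + INR n * h) + h) by ring.
    rewrite P. exact IHn.
Qed.

Definition Cf (f : R -> R) := forall x, continuity_pt f x.

Lemma Cf_ext (f g : R -> R) : (forall x, f x = g x) -> Cf f -> Cf g.
Proof. intros E H. replace g with f. exact H. now apply functional_extensionality. Qed.

Lemma Cf_const (c : R) : Cf (fun _ => c).
Proof. intros x. apply continuity_pt_const. intros a b. reflexivity. Qed.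

Lemma Cf_id : Cf (fun x => x).
Proof. intros x. apply derivable_continuous_pt. apply derivable_pt_id. Qed.

Lemma Cf_plus (f g : R -> R) : Cf f -> Cf g -> Cf (fun x => f x + g x).
Proof. intros Hf Hg x. exact (continuity_pt_plus f g x (Hf x) (Hg x)). Qed.

Lemma Cf_mult (f g : R -> R) : Cf f -> Cf g -> Cf (fun x => f x * g x).
Proof. intros Hf Hg x. exact (continuity_pt_mult f g x (Hf x) (Hg x)). Qed.

Lemma Cf_comp (f g : R -> R) : Cf f -> Cf g -> Cf (fun x => g (f x)).
Proof. intros Hf Hg x. exact (continuity_pt_comp f g x (Hf x) (Hg (f x))). Qed.

Lemma Cf_opp (f : R -> R) : Cf f -> Cf (fun x => - f x).
Proof.
  intros H. apply Cf_ext with (fun x => (-1) * f x). intros; ring.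
  apply Cf_mult; auto. apply Cf_const.
Qed.

Lemma Cf_minus (f g : R -> R) : Cf f -> Cf g -> Cf (fun x => f x - g x).
Proof. intros. apply Cf_plus; auto. now apply Cf_opp. Qed.

Lemma Cf_exp (f : R -> R) : Cf f -> Cf (fun x => exp (f x)).
Proof.
  intros H. apply (Cf_comp f exp H). intros x. apply derivable_continuous_pt, derivable_pt_exp.
Qed.

Lemma Cf_abs (f : R -> R) : Cf f -> Cf (fun x => Rabs (f x)).
Proof. intros H. apply (Cf_comp f Rabs H). intros x. apply Rcontinuity_abs. Qed.

Lemma Rmax_formula (a b : R) : Rmax a b = (a + b + Rabs (a - b)) / 2.
Proof.
  unfold Rmax. destruct (Rle_dec a b).
  - rewrite Rabs_left1 by lra. field.
  - rewrite Rabs_right by lra. field.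
Qed.

Lemma Cf_max (f g : R -> R) : Cf f -> Cf g -> Cf (fun x => Rmax (f x) (g x)).
Proof.
  intros Hf Hg. apply Cf_ext with (fun x => (f x + g x + Rabs (f x - g x)) * / 2).
  intros; rewrite Rmax_formula; reflexivity.
  apply Cf_mult; [|apply Cf_const]. apply Cf_plus. apply Cf_plus; auto.
  apply Cf_abs, Cf_minus; auto.
Qed.

Lemma Cf_lip (f : R -> R) (K : R) : 0 <= K -> (forall u v, Rabs (f u - f v) <= K * Rabs (u - v)) -> Cf f.
Proof.
  intros HK Hl x0. unfold continuity_pt, continue_in, limit1_in, limit_in.
  intros eps Heps. exists (eps / (K + 1)). split.
  - apply Rdiv_lt_0_compat; lra.
  - intros x [_ Hx]. simpl in *. unfold R_dist in *.
    pose proof (Hl x x0).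
    assert (K * Rabs (x - x0) <= K * (eps / (K + 1))) by (apply Rmult_le_compat_l; lra).
    assert (K * (eps / (K + 1)) < eps).
    { apply Rmult_lt_reg_r with (K + 1). lra. field_simplify; [|lra]. lra. }
    lra.
Qed.

Lemma Cf_phi : Cf phi.
Proof. apply (Cf_lip phi 2). lra. apply phi_lip. Qed.

Lemma Cf_phi_iter (n : nat) : Cf (phi_iter n).
Proof.
  induction n.
  - exact Cf_id.
  - apply (Cf_comp (phi_iter n) phi IHn Cf_phi).
Qed.

Lemma Cf_phi_star (n : nat) : Cf (phi_star n).
Proof. apply Cf_minus. apply Cf_phi_iter. apply Cf_const. Qed.

Lemma Cf_continuous (f : R -> R) : Cf f -> forall x, continuous f x.
Proof. intros H x. apply continuity_pt_filterlim. apply H. Qed.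

Lemma Cf_ex_RInt (f : R -> R) (a b : R) : Cf f -> ex_RInt f a b.
Proof. intros H. apply (@ex_RInt_continuous R_CompleteNormedModule). intros z _. now apply Cf_continuous. Qed.

Lemma phi_star_bound (n : nat) (x : R) : (1 <= n)%nat -> Rabs (phi_star n x) <= 1/2.
Proof.
  intros Hn. destruct n as [|n]; [lia|]. unfold phi_star.
  change (phi_iter (S n) x) with (phi (phi_iter n x)).
  pose proof (phi_range (phi_iter n x)). apply Rabs_le. lra.
Qed.



Lemma int_shift (F : R -> R) (p a b : R) : Cf F ->
  RInt (fun x => F (x + p)) a b = RInt F (a + p) (b + p).
Proof.
  intros H.
  assert (E := @RInt_comp_lin R_CompleteNormedModule F 1 p a b (Cf_ex_RInt F _ _ H)).
  rewrite !Rmult_1_l in E. rewrite <- E.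
  apply RInt_ext. intros x _. rewrite !Rmult_1_l. reflexivity.
Qed.

Lemma per_int (F : R -> R) (p : R) : Cf F -> Per p F ->
  forall n : nat, RInt F 0 (INR n * p) = INR n * RInt F 0 p.
Proof.
  intros H P n. induction n.
  - simpl. rewrite !Rmult_0_l. rewrite RInt_point. reflexivity.
  - rewrite S_INR.
    rewrite <- (RInt_Chasles F 0 (INR n * p) ((INR n + 1) * p)) by (apply Cf_ex_RInt; auto).
    rewrite IHn.
    assert (E : RInt F (INR n * p) ((INR n + 1) * p) = RInt F 0 p).
    { replace (INR n * p) with (0 + INR n * p) by ring.
      replace ((INR n + 1) * p) with (p + INR n * p) by ring.
      rewrite <- int_shift by auto.
      apply RInt_ext. intros; apply Per_nat; auto. }
    rewrite E. change (plus (INR n * RInt F 0 p) (RInt F 0 p) = (INR n + 1) * RInt F 0 p). unfold plus; simpl. ring.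
Qed.

Lemma half_int (F : R -> R) (h : R) : Cf F ->
  RInt F 0 (2 * h) = RInt (fun x => F x + F (x + h)) 0 h.
Proof.
  intros H.
  assert (Hs : Cf (fun x => F (x + h))).
  { apply (Cf_comp (fun x => x + h) F). apply Cf_plus. apply Cf_id. apply Cf_const. auto. }
  transitivity (plus (RInt F 0 h) (RInt (fun x => F (x + h)) 0 h)).
  2:{ symmetry. apply (@RInt_plus R_CompleteNormedModule); apply Cf_ex_RInt; auto. }
  rewrite int_shift by auto.
  rewrite Rplus_0_l. replace (h + h) with (2 * h) by ring.
  symmetry. apply (@RInt_Chasles R_CompleteNormedModule F 0 h (2 * h)); apply Cf_ex_RInt; auto.
Qed.

Lemma key (m : nat) (W g : R -> R) : Cf W -> Cf g -> Per (/ (2 * 2 ^ m)) W ->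
  RInt (fun x => W x * g (phi_star (S m) x)) 0 1 =
  2 ^ m * RInt (fun x => W x * (g (2 * 2 ^ m * x - 1/2) + g (1/2 - 2 * 2 ^ m * x))) 0 (/ (2 * 2 ^ m)).
Proof.
  intros HW Hg PW.
  set (u := 2 ^ m). assert (Hu : 0 < u) by apply two_pow_pos.
  set (h := / (2 * u)).
  set (F := fun x => W x * g (phi_star (S m) x)).
  assert (CF : Cf F).
  { apply Cf_mult; auto. apply (Cf_comp (phi_star (S m)) g); auto. apply Cf_phi_star. }
  assert (PF : Per (/ u) F).
  { intros x. unfold F. rewrite (ps_per m (S m)) by lia.
    replace (x + / u) with (x + h + h) by (unfold h; field; lra).
    rewrite !PW. reflexivity. }
  assert (E1 : 1 = INR (2 ^ m) * / u).
  { rewrite pow_INR. replace (INR 2) with 2 by (simpl; ring). fold u. field. lra. }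
  replace (RInt F 0 1) with (RInt F 0 (INR (2 ^ m) * / u)) by (rewrite <- E1; reflexivity).
  rewrite (per_int F (/ u) CF PF). rewrite pow_INR. replace (INR 2) with 2 by (simpl; ring). fold u.
  f_equal.
  replace (RInt F 0 (/ u)) with (RInt F 0 (2 * h)) by (f_equal; unfold h; field; lra).
  rewrite half_int by auto.
  apply RInt_ext. intros x Hx.
  assert (Hh : 0 < h) by (unfold h; apply Rinv_0_lt_compat; lra).
  rewrite Rmin_left in Hx by lra. rewrite Rmax_right in Hx by lra.
  assert (Hux : 0 < u * x < 1/2).
  { split. apply Rmult_lt_0_compat; lra.
    assert (u * x < u * h) by (apply Rmult_lt_compat_l; lra).
    assert (u * h = 1/2) by (unfold h; field; lra). lra. }
  unfold F. rewrite PW. unfold phi_star. rewrite !phi_iter_S. fold u.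
  rewrite phi_01 by lra.
  replace (u * (x + h)) with (u * x + 1/2) by (unfold h; field; lra).
  rewrite phi_01 by lra.
  unfold tent. destruct (Rle_dec (u * x) (1/2)); [|lra].
  destruct (Rle_dec (u * x + 1/2) (1/2)); [lra|].
  replace (2 * (u * x) - 1/2) with (2 * u * x - 1/2) by ring.
  replace (2 * (1 - (u * x + 1/2)) - 1/2) with (1/2 - 2 * u * x) by lra. rewrite Rmult_plus_distr_l. reflexivity.
Qed.



Lemma cosh_bound (t : R) : exp t + exp (- t) <= 2 * exp (2 * t ^ 2).
Proof.
  assert (Hs : forall s, 0 <= s -> exp s + exp (- s) <= 2 * exp (2 * s ^ 2)).
  { intros s Hs0.
    assert (AB : exp s * exp (- s) = 1) by (rewrite <- exp_plus; replace (s + - s) with 0 by ring; apply exp_0).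
    pose proof (exp_pos s). pose proof (exp_pos (- s)).
    pose proof (exp_ineq1_le s). pose proof (exp_ineq1_le (- s)).
    pose proof (exp_ineq1_le (2 * s ^ 2)).
    destruct (Rlt_or_le s (1/2)) as [Hl|Hl].
    - set (A := exp s) in *. set (B := exp (- s)) in *.
      assert (A * (1 - s) <= 1) by nra.
      assert (B * (1 + s) <= 1) by nra.
      assert (A <= 1 + s + 2 * s ^ 2).
      { assert ((1 + s + 2 * s ^ 2) * (1 - s) >= 1) by nra. nra. }
      assert (B <= 1 - s + s ^ 2).
      { assert ((1 - s + s ^ 2) * (1 + s) >= 1) by nra. nra. }
      nra.
    - assert (exp (- s) <= exp s) by (apply exp_le; lra).
      assert (exp s <= exp (2 * s ^ 2)) by (apply exp_le; nra).
      lra. }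
  destruct (Rle_or_lt 0 t) as [H|H].
  - now apply Hs.
  - replace (2 * t ^ 2) with (2 * (- t) ^ 2) by ring.
    rewrite Rplus_comm. replace t with (- - t) at 2 by ring. apply Hs. lra.
Qed.

Lemma cosh_bd (nu t : R) : Rabs t <= 1/2 -> exp (nu * t) + exp (nu * - t) <= 2 * exp (nu ^ 2 / 2).
Proof.
  intros Ht. replace (nu * - t) with (- (nu * t)) by ring.
  eapply Rle_trans. apply cosh_bound.
  apply Rmult_le_compat_l. lra. apply exp_le.
  assert (t ^ 2 <= 1/4).
  { replace (t ^ 2) with (Rabs t * Rabs t). pose proof (Rabs_pos t). nra.
    rewrite <- Rabs_mult. rewrite Rabs_right. ring. nra. }
  replace ((nu * t) ^ 2) with (nu ^ 2 * t ^ 2) by ring.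
  pose proof (pow2_ge_0 nu). nra.
Qed.

Lemma RInt_scal_l (f : R -> R) (a b l : R) : Cf f ->
  RInt (fun x => l * f x) a b = l * RInt f a b.
Proof. intros H. apply (@RInt_scal R_CompleteNormedModule). now apply Cf_ex_RInt. Qed.

Lemma E_one (m : nat) (W : R -> R) : Cf W -> Per (/ (2 * 2 ^ m)) W ->
  RInt W 0 1 = 2 ^ m * RInt (fun x => W x * (1 + 1)) 0 (/ (2 * 2 ^ m)).
Proof.
  intros HW PW.
  rewrite <- (key m W (fun _ => 1) HW (Cf_const 1) PW).
  apply RInt_ext. intros x _. rewrite Rmult_1_r. reflexivity.
Qed.

Lemma h_facts (m : nat) (x : R) : 0 < x < / (2 * 2 ^ m) -> Rabs (2 * 2 ^ m * x - 1/2) <= 1/2.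
Proof.
  intros Hx. pose proof (two_pow_pos m).
  assert (0 < 2 * 2 ^ m * x) by (apply Rmult_lt_0_compat; lra).
  assert (2 * 2 ^ m * x < 1).
  { assert (2 * 2 ^ m * x < 2 * 2 ^ m * / (2 * 2 ^ m)) by (apply Rmult_lt_compat_l; lra).
    rewrite Rinv_r in H1 by lra. lra. }
  apply Rabs_le. lra.
Qed.

Lemma Cf_key_int (g W : R -> R) (m : nat) : Cf g -> Cf W ->
  Cf (fun x => W x * (g (2 * 2 ^ m * x - 1/2) + g (1/2 - 2 * 2 ^ m * x))).
Proof.
  intros Hg HW. apply Cf_mult; auto. apply Cf_plus.
  - apply (Cf_comp (fun x => 2 * 2 ^ m * x - 1/2) g); auto.
    apply Cf_minus. apply Cf_mult. apply Cf_const. apply Cf_id. apply Cf_const.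
  - apply (Cf_comp (fun x => 1/2 - 2 * 2 ^ m * x) g); auto.
    apply Cf_minus. apply Cf_const. apply Cf_mult. apply Cf_const. apply Cf_id.
Qed.

Lemma E_cosh (m : nat) (W : R -> R) (nu : R) : Cf W -> Per (/ (2 * 2 ^ m)) W -> (forall x, 0 <= W x) ->
  RInt (fun x => W x * exp (nu * phi_star (S m) x)) 0 1 <= exp (nu ^ 2 / 2) * RInt W 0 1.
Proof.
  intros HW PW Wpos.
  assert (Cg : Cf (fun t => exp (nu * t))) by (apply Cf_exp, Cf_mult; [apply Cf_const|apply Cf_id]).
  rewrite (key m W (fun t => exp (nu * t)) HW Cg PW).
  rewrite (E_one m W HW PW).
  pose proof (two_pow_pos m).
  rewrite <- Rmult_assoc, (Rmult_comm (exp _) (2 ^ m)), Rmult_assoc.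
  apply Rmult_le_compat_l. lra.
  rewrite <- RInt_scal_l.
  2:{ apply Cf_mult; auto. apply Cf_const. }
  apply RInt_le.
  - left. apply Rinv_0_lt_compat. lra.
  - apply Cf_ex_RInt. apply (Cf_key_int _ W m Cg HW).
  - apply Cf_ex_RInt. apply Cf_mult. apply Cf_const. apply Cf_mult; auto. apply Cf_const.
  - intros x Hx. pose proof (h_facts m x Hx).
    replace (1/2 - 2 * 2 ^ m * x) with (- (2 * 2 ^ m * x - 1/2)) by ring.
    pose proof (cosh_bd nu _ H0). pose proof (Wpos x). nra.
Qed.

Lemma E_pos (m : nat) (W : R -> R) (nu : R) : Cf W -> Per (/ (2 * 2 ^ m)) W -> (forall x, 0 <= W x) ->
  0 <= RInt (fun x => W x * (exp (nu * phi_star (S m) x) - 1)) 0 1.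
Proof.
  intros HW PW Wpos.
  assert (Cg : Cf (fun t => exp (nu * t) - 1)) by (apply Cf_minus; [apply Cf_exp, Cf_mult; [apply Cf_const|apply Cf_id]|apply Cf_const]).
  rewrite (key m W (fun t => exp (nu * t) - 1) HW Cg PW).
  pose proof (two_pow_pos m).
  apply Rmult_le_pos. lra.
  apply RInt_ge_0.
  - left. apply Rinv_0_lt_compat. lra.
  - apply Cf_ex_RInt. apply (Cf_key_int _ W m Cg HW).
  - intros x Hx. apply Rmult_le_pos. apply Wpos.
    set (s := nu * (2 * 2 ^ m * x - 1 / 2)).
    replace (nu * (1/2 - 2 * 2 ^ m * x)) with (- s) by (unfold s; ring).
    pose proof (exp_ineq1_le s). pose proof (exp_ineq1_le (- s)). lra.
Qed.



Fixpoint psum (u : nat -> R) (N k : nat) : R :=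
  match k with O => 0 | S k => u N + psum u (S N) k end.

Definition tr (c : nat -> R) (N k : nat) (x : R) : R := psum (fun n => c n * phi_star n x) N k.

Lemma tr_S (c : nat -> R) (N k : nat) (x : R) : tr c N (S k) x = c N * phi_star N x + tr c (S N) k x.
Proof. reflexivity. Qed.

Lemma Cf_tr (c : nat -> R) (N k : nat) : Cf (tr c N k).
Proof.
  revert N. induction k; intros N.
  - apply Cf_const.
  - apply Cf_ext with (fun x => c N * phi_star N x + tr c (S N) k x). intros; reflexivity.
    apply Cf_plus; auto. apply Cf_mult. apply Cf_const. apply Cf_phi_star.
Qed.

Lemma Per_tr (c : nat -> R) (N k j : nat) : (j < N)%nat -> Per (/ 2 ^ j) (tr c N k).
Proof.
  revert N. induction k; intros N HN x.
  - reflexivity.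
  - rewrite !tr_S. rewrite (ps_per j N HN). rewrite IHk by lia. reflexivity.
Qed.

Lemma Per_comp (h : R) (f g : R -> R) : Per h f -> Per h (fun x => g (f x)).
Proof. intros P x. now rewrite P. Qed.

Lemma subg (c : nat -> R) (mu : R) (k N : nat) : (1 <= N)%nat ->
  RInt (fun x => exp (mu * tr c N k x)) 0 1 <= exp (mu ^ 2 / 2 * psum (fun n => c n ^ 2) N k).
Proof.
  revert N. induction k; intros N HN.
  - simpl. rewrite (RInt_ext _ (fun _ => 1)) by (intros; rewrite Rmult_0_r; apply exp_0).
    rewrite RInt_const. rewrite Rmult_0_r, exp_0. unfold scal; simpl; unfold mult; simpl. lra.
  - destruct N as [|m]; [lia|].
    set (W := fun x => exp (mu * tr c (S (S m)) k x)).
    rewrite (RInt_ext _ (fun x => W x * exp ((mu * c (S m)) * phi_star (S m) x))).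
    2:{ intros x _. unfold W. rewrite tr_S, <- exp_plus. f_equal. ring. }
    assert (CW : Cf W) by (apply Cf_exp, Cf_mult; [apply Cf_const|apply Cf_tr]).
    assert (PW : Per (/ (2 * 2 ^ m)) W).
    { intros x. unfold W. change (/ (2 * 2 ^ m)) with (/ 2 ^ (S m)).
      rewrite (Per_tr c (S (S m)) k (S m)) by lia. reflexivity. }
    eapply Rle_trans. apply E_cosh; auto. intros; apply Rlt_le, exp_pos.
    eapply Rle_trans. apply Rmult_le_compat_l. apply Rlt_le, exp_pos. apply IHk. lia.
    rewrite <- exp_plus. apply exp_le. simpl. lra.
Qed.



Section Doob.
Variables (c : nat -> R) (mu : R) (a b L : nat).
Hypotheses (Ha : (1 <= a)%nat) (Hab : (a <= b)%nat) (HbL : (b < L)%nat).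

Definition SS (N : nat) (x : R) := tr c N (L - N) x.
Definition xs (k : nat) (x : R) := exp (mu / 2 * SS (b - k) x).
Fixpoint ms (k : nat) (x : R) : R :=
  match k with O => xs O x | S k' => Rmax (ms k' x) (xs (S k') x) end.

Lemma Cf_xs k : Cf (xs k).
Proof. unfold xs, SS. apply Cf_exp, Cf_mult. apply Cf_const. apply Cf_tr. Qed.

Lemma Cf_ms k : Cf (ms k).
Proof. induction k; simpl. apply Cf_xs. apply Cf_max; auto. apply Cf_xs. Qed.

Lemma xs_pos k x : 0 < xs k x.
Proof. apply exp_pos. Qed.

Lemma xs_le_ms j k x : (j <= k)%nat -> xs j x <= ms k x.
Proof.
  induction k; intros H.
  - replace j with O by lia. simpl. lra.
  - simpl. destruct (Nat.eq_dec j (S k)) as [E|E].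
    + subst. apply Rmax_r.
    + eapply Rle_trans. apply IHk. lia. apply Rmax_l.
Qed.

Lemma ms_pos k x : 0 < ms k x.
Proof. eapply Rlt_le_trans. apply (xs_pos O x). apply xs_le_ms. lia. Qed.

Lemma Per_xs j k : (j < b - k)%nat -> Per (/ 2 ^ j) (xs k).
Proof. intros H x. unfold xs, SS. rewrite (Per_tr c (b - k) (L - (b - k)) j H). reflexivity. Qed.

Lemma Per_ms j k : (j < b - k)%nat -> Per (/ 2 ^ j) (ms k).
Proof.
  induction k; intros H x; simpl.
  - apply Per_xs; auto.
  - rewrite IHk by lia. rewrite (Per_xs j (S k)) by lia. reflexivity.
Qed.

Definition Phi (k : nat) (x : R) := 4 * xs k x ^ 2 - ms k x ^ 2 - (ms k x - 2 * xs k x) ^ 2.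

Lemma Cf_Phi k : Cf (Phi k).
Proof.
  unfold Phi. pose proof (Cf_xs k). pose proof (Cf_ms k).
  apply Cf_minus; [apply Cf_minus|].
  - apply Cf_mult. apply Cf_const. simpl. apply Cf_mult; auto. apply Cf_mult; auto. apply Cf_const.
  - simpl. apply Cf_mult; auto. apply Cf_mult; auto. apply Cf_const.
  - simpl. assert (C : Cf (fun x => ms k x - 2 * xs k x)).
    { apply Cf_minus; auto. apply Cf_mult; auto. apply Cf_const. }
    apply Cf_mult; auto. apply Cf_mult; auto. apply Cf_const.
Qed.

Lemma pathwise (x0 m0 x1 : R) :
  4 * x1 ^ 2 - Rmax m0 x1 ^ 2 - (Rmax m0 x1 - 2 * x1) ^ 2 >=
  4 * x0 ^ 2 - m0 ^ 2 - (m0 - 2 * x0) ^ 2 + 4 * m0 * (x1 - x0).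
Proof.
  unfold Rmax. destruct (Rle_dec m0 x1); nra.
Qed.

Lemma xs_step k x : (S k <= b - a)%nat ->
  exists m, (b - S k = S m)%nat /\
  xs (S k) x = xs k x * exp ((mu / 2 * c (S m)) * phi_star (S m) x).
Proof.
  intros H. exists (b - S k - 1)%nat. split. lia.
  unfold xs, SS. rewrite <- exp_plus. f_equal.
  replace (b - S k)%nat with (S (b - S k - 1)) at 1 2 by lia.
  replace (L - S (b - S k - 1))%nat with (S (L - (b - k))) by lia.
  rewrite tr_S. replace (S (S (b - S k - 1))) with (b - k)%nat by lia. ring.
Qed.

Lemma Phi_int k : (k <= b - a)%nat -> 0 <= RInt (Phi k) 0 1.
Proof.
  induction k; intros Hk.
  - apply RInt_ge_0. lra. apply Cf_ex_RInt, Cf_Phi.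
    intros x _. unfold Phi. simpl. pose proof (xs_pos O x). nra.
  - destruct (xs_step k 0 Hk) as [m [Em _]].
    set (W := fun x => ms k x * xs k x).
    set (nu := mu / 2 * c (S m)).
    assert (CW : Cf W) by (apply Cf_mult; [apply Cf_ms|apply Cf_xs]).
    assert (PW : Per (/ (2 * 2 ^ m)) W).
    { intros x. unfold W. change (/ (2 * 2 ^ m)) with (/ 2 ^ (S m)).
      rewrite Per_ms, Per_xs by lia. reflexivity. }
    assert (Wpos : forall x, 0 <= W x).
    { intros x. unfold W. pose proof (ms_pos k x). pose proof (xs_pos k x). nra. }
    pose proof (E_pos m W nu CW PW Wpos) as HE.
    assert (CE : Cf (fun x => W x * (exp (nu * phi_star (S m) x) - 1))).
    { apply Cf_mult; auto. apply Cf_minus. apply Cf_exp. apply Cf_mult. apply Cf_const. apply Cf_phi_star. apply Cf_const. }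
    assert (I1 : RInt (fun x => Phi k x + 4 * (W x * (exp (nu * phi_star (S m) x) - 1))) 0 1
                 = RInt (Phi k) 0 1 + 4 * RInt (fun x => W x * (exp (nu * phi_star (S m) x) - 1)) 0 1).
    { rewrite <- RInt_scal_l by auto.
      apply (@RInt_plus R_CompleteNormedModule); apply Cf_ex_RInt. apply Cf_Phi.
      apply Cf_mult; auto. apply Cf_const. }
    assert (I2 : RInt (fun x => Phi k x + 4 * (W x * (exp (nu * phi_star (S m) x) - 1))) 0 1 <= RInt (Phi (S k)) 0 1).
    { apply RInt_le. lra.
      apply Cf_ex_RInt. apply Cf_plus. apply Cf_Phi. apply Cf_mult; auto. apply Cf_const.
      apply Cf_ex_RInt, Cf_Phi.
      intros x _. destruct (xs_step k x Hk) as [m' [Em' Ex]].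
      assert (m' = m) by lia. subst m'.
      assert (EQ : 4 * ms k x * (xs (S k) x - xs k x) = 4 * (W x * (exp (nu * phi_star (S m) x) - 1)))
        by (unfold W, nu; rewrite Ex; ring).
      pose proof (pathwise (xs k x) (ms k x) (xs (S k) x)).
      unfold Phi. change (ms (S k) x) with (Rmax (ms k x) (xs (S k) x)). lra. }
    specialize (IHk ltac:(lia)). nra.
Qed.

Lemma doob : RInt (fun x => ms (b - a) x ^ 2) 0 1 <=
  4 * exp (mu ^ 2 / 2 * psum (fun n => c n ^ 2) a (L - a)).
Proof.
  pose proof (Phi_int (b - a) (le_n _)) as H.
  assert (E : forall x, xs (b - a) x ^ 2 = exp (mu * tr c a (L - a) x)).
  { intros x. unfold xs, SS. replace (b - (b - a))%nat with a by lia.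
    simpl. rewrite Rmult_1_r, <- exp_plus. f_equal. field. }
  assert (Cm : Cf (fun x => ms (b - a) x ^ 2)).
  { simpl. apply Cf_mult. apply Cf_ms. apply Cf_mult. apply Cf_ms. apply Cf_const. }
  apply Rle_trans with (RInt (fun x => ms (b - a) x ^ 2 + Phi (b - a) x) 0 1).
  { transitivity (plus (RInt (fun x => ms (b - a) x ^ 2) 0 1) (RInt (Phi (b - a)) 0 1)).
    - change plus with Rplus. lra.
    - right. symmetry. apply (@RInt_plus R_CompleteNormedModule); apply Cf_ex_RInt; auto. apply Cf_Phi. }
  apply Rle_trans with (RInt (fun x => 4 * exp (mu * tr c a (L - a) x)) 0 1).
  - apply RInt_le. lra.
    apply Cf_ex_RInt. apply Cf_plus; auto. apply Cf_Phi.
    apply Cf_ex_RInt. apply Cf_mult. apply Cf_const. apply Cf_exp, Cf_mult. apply Cf_const. apply Cf_tr.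
    intros x _. rewrite <- E. unfold Phi. pose proof (pow2_ge_0 (ms (b - a) x - 2 * xs (b - a) x)); lra.
  - rewrite RInt_scal_l. apply Rmult_le_compat_l. lra. apply subg. auto.
    apply Cf_exp, Cf_mult. apply Cf_const. apply Cf_tr.
Qed.

End Doob.



Lemma fold_upper (f : nat -> R) (d : R) (l : list nat) :
  d <= fold_right Rmax d (map f l) /\ (forall N, In N l -> f N <= fold_right Rmax d (map f l)).
Proof.
  induction l as [|n l IH]; simpl.
  - split. lra. tauto.
  - destruct IH as [IH1 IH2]. split.
    + eapply Rle_trans. apply IH1. apply Rmax_r.
    + intros N [E|HN]. subst. apply Rmax_l.
      eapply Rle_trans. apply IH2; auto. apply Rmax_r.
Qed.

Lemma fold_attained (f : nat -> R) (d : R) (l : list nat) :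
  fold_right Rmax d (map f l) = d \/ exists N, In N l /\ fold_right Rmax d (map f l) = f N.
Proof.
  induction l as [|n l IH]; simpl.
  - now left.
  - destruct (Rle_dec (f n) (fold_right Rmax d (map f l))) as [H|H].
    + rewrite Rmax_right by auto.
      destruct IH as [E|[N [HN E]]]. now left. right. exists N. auto.
    + rewrite Rmax_left by lra. right. exists n. auto.
Qed.

Lemma max_range_upper (f : nat -> R) (a b N : nat) : (a <= N <= b)%nat -> f N <= max_range f a b.
Proof.
  intros H. unfold max_range. apply fold_upper. apply in_seq. lia.
Qed.

Lemma max_range_attained (f : nat -> R) (a b : nat) : (a <= b)%nat ->
  exists N, (a <= N <= b)%nat /\ max_range f a b = f N.
Proof.
  intros Hab. unfold max_range. destruct (fold_attained f (f a) (seq a (S (b - a)))) as [E|[N [HN E]]].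
  - exists a. split. lia. auto.
  - exists N. apply in_seq in HN. split. lia. auto.
Qed.

Lemma Cf_fold (F : nat -> R -> R) (d : R -> R) (l : list nat) :
  Cf d -> (forall N, Cf (F N)) -> Cf (fun x => fold_right Rmax (d x) (map (fun N => F N x) l)).
Proof.
  intros Hd HF. induction l as [|n l IH]; simpl. auto. apply Cf_max; auto.
Qed.

Lemma Cf_max_range (F : nat -> R -> R) (a b : nat) :
  (forall N, Cf (F N)) -> Cf (fun x => max_range (fun N => F N x) a b).
Proof. intros HF. unfold max_range. apply Cf_fold; auto. Qed.

Lemma exp_max_bound (f : nat -> R) (lam : R) (a b : nat) : (a <= b)%nat ->
  exists N, (a <= N <= b)%nat /\
  exp (lam * max_range (fun N => Rabs (f N)) a b) <= exp (lam * f N) + exp (- lam * f N).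
Proof.
  intros Hab.
  assert (Hc : forall N, exp (lam * Rabs (f N)) <= exp (lam * f N) + exp (- lam * f N)).
  { intros N. unfold Rabs. destruct (Rcase_abs (f N)).
    - replace (lam * - f N) with (- lam * f N) by ring. pose proof (exp_pos (lam * f N)). lra.
    - pose proof (exp_pos (- lam * f N)). lra. }
  destruct (Rle_or_lt 0 lam) as [Hl|Hl].
  - destruct (max_range_attained (fun N => Rabs (f N)) a b Hab) as [N [HN E]].
    exists N. split; auto. rewrite E. apply Hc.
  - exists a. split. lia. eapply Rle_trans; [|apply Hc].
    apply exp_le. pose proof (max_range_upper (fun N => Rabs (f N)) a b a ltac:(lia)). simpl in H. nra.
Qed.

Lemma exp_le_ms (c : nat -> R) (mu : R) (a b L N : nat) (x : R) :
  (1 <= a)%nat -> (a <= b)%nat -> (b < L)%nat -> (a <= N <= b)%nat ->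
  exp (mu * tr c N (L - N) x) <= ms c mu b L (b - a) x ^ 2.
Proof.
  intros Ha Hab HbL HN.
  assert (E : exp (mu * tr c N (L - N) x) = xs c mu b L (b - N) x ^ 2).
  { unfold xs, SS. replace (b - (b - N))%nat with N by lia.
    simpl. rewrite Rmult_1_r, <- exp_plus. f_equal. field. }
  rewrite E. pose proof (xs_pos c mu b L (b - N) x).
  pose proof (xs_le_ms c mu a b L Ha Hab HbL (b - N) (b - a) x ltac:(lia)). nra.
Qed.

Lemma trunc_main (c : nat -> R) (lam : R) (a b L : nat) :
  (1 <= a)%nat -> (a <= b)%nat -> (b < L)%nat ->
  RInt (fun x => exp (lam * max_range (fun N => Rabs (tr c N (L - N) x)) a b)) 0 1
  <= 8 * exp (lam ^ 2 / 2 * psum (fun n => c n ^ 2) a (L - a)).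
Proof.
  intros Ha Hab HbL.
  assert (Cm : forall mu, Cf (fun x => ms c mu b L (b - a) x ^ 2)).
  { intros mu. simpl. apply Cf_mult. apply Cf_ms. apply Cf_mult. apply Cf_ms. apply Cf_const. }
  apply Rle_trans with (RInt (fun x => ms c lam b L (b - a) x ^ 2 + ms c (- lam) b L (b - a) x ^ 2) 0 1).
  - apply RInt_le. lra.
    + apply Cf_ex_RInt. apply Cf_exp. apply Cf_mult. apply Cf_const.
      apply (Cf_max_range (fun N x => Rabs (tr c N (L - N) x))). intros N. apply Cf_abs, Cf_tr.
    + apply Cf_ex_RInt. apply Cf_plus; auto.
    + intros x _. destruct (exp_max_bound (fun N => tr c N (L - N) x) lam a b Hab) as [N [HN E]].
      eapply Rle_trans. apply E. apply Rplus_le_compat; apply exp_le_ms; auto.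
  - transitivity (plus (RInt (fun x => ms c lam b L (b - a) x ^ 2) 0 1) (RInt (fun x => ms c (- lam) b L (b - a) x ^ 2) 0 1)).
    + right. apply (@RInt_plus R_CompleteNormedModule); apply Cf_ex_RInt; auto.
    + change plus with Rplus.
      pose proof (doob c lam a b L Ha Hab HbL). pose proof (doob c (- lam) a b L Ha Hab HbL).
      replace ((- lam) ^ 2) with (lam ^ 2) in H0 by ring. lra.
Qed.



Lemma Series_zero : Series (fun _ => 0) = 0.
Proof.
  rewrite (Series_ext _ (fun n => 0 * 0)) by (intros; ring).
  rewrite Series_scal_l. ring.
Qed.

Lemma Series_nonneg (u : nat -> R) : (forall n, 0 <= u n) -> ex_series u -> 0 <= Series u.
Proof.
  intros H E. rewrite <- Series_zero. apply Series_le; auto. intros; split; auto; lra.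
Qed.

Lemma psum_nonneg (u : nat -> R) N k : (forall n, 0 <= u n) -> 0 <= psum u N k.
Proof.
  intros H. revert N; induction k; intros N; simpl. lra. pose proof (H N). pose proof (IHk (S N)). lra.
Qed.

Lemma series_split (u : nat -> R) (N k : nat) : ex_series (fun j => u (N + j)%nat) ->
  Series (fun j => u (N + j)%nat) = psum u N k + Series (fun j => u (N + k + j)%nat).
Proof.
  revert N. induction k; intros N E.
  - simpl. rewrite Rplus_0_l. apply Series_ext. intros j. f_equal. lia.
  - rewrite Series_incr_1 by auto.
    assert (E' : ex_series (fun j => u (S N + j)%nat)).
    { apply ex_series_incr_1 in E. eapply ex_series_ext; [|exact E]. intros j. simpl. f_equal. lia. }
    rewrite (Series_ext (fun k => u (N + S k)%nat) (fun j => u (S N + j)%nat)) by (intros; f_equal; lia).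
    rewrite IHk by auto. simpl psum. replace (N + 0)%nat with N by lia.
    rewrite (Series_ext (fun j => u (S N + k + j)%nat) (fun j => u (N + S k + j)%nat)) by (intros; f_equal; lia).
    ring.
Qed.

Section Tail.
Variable c : nat -> R.
Hypothesis hc : ex_series (fun k => Rabs (c (S k))).

Lemma ex_abs (N : nat) : (1 <= N)%nat -> ex_series (fun k => Rabs (c (N + k)%nat)).
Proof.
  intros HN. apply (ex_series_incr_n _ (N - 1)) in hc.
  eapply ex_series_ext; [|exact hc]. intros k. simpl. f_equal. f_equal. lia.
Qed.

Lemma term_bound (n : nat) (x : R) : (1 <= n)%nat -> Rabs (c n * phi_star n x) <= Rabs (c n).
Proof.
  intros Hn. rewrite Rabs_mult. pose proof (phi_star_bound n x Hn). pose proof (Rabs_pos (c n)).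
  pose proof (Rabs_pos (phi_star n x)). nra.
Qed.

Lemma ex_terms (N : nat) (x : R) : (1 <= N)%nat -> ex_series (fun k => c (N + k)%nat * phi_star (N + k) x).
Proof.
  intros HN. apply (@ex_series_le R_AbsRing R_CompleteNormedModule _ (fun k => Rabs (c (N + k)%nat))).
  - intros n. change (norm ?y) with (Rabs y). apply term_bound. lia.
  - now apply ex_abs.
Qed.

Lemma tail_bound (L : nat) (x : R) : (1 <= L)%nat ->
  Rabs (Series (fun j => c (L + j)%nat * phi_star (L + j) x)) <= Series (fun j => Rabs (c (L + j)%nat)).
Proof.
  intros HL. eapply Rle_trans. apply Series_Rabs.
  - apply (@ex_series_le R_AbsRing R_CompleteNormedModule _ (fun k => Rabs (c (L + k)%nat))).
    + intros n. change (norm ?y) with (Rabs y). rewrite Rabs_Rabsolu. apply term_bound. lia.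
    + now apply ex_abs.
  - apply Series_le. intros n. split. apply Rabs_pos. apply term_bound. lia. now apply ex_abs.
Qed.

Lemma tail_small (eps : R) : 0 < eps -> exists L0, forall L, (L0 <= L)%nat ->
  Series (fun j => Rabs (c (L + j)%nat)) <= eps.
Proof.
  intros He. set (v := fun k => Rabs (c (S k))).
  pose proof (Series_correct v hc) as HS. apply is_series_Reals in HS.
  destruct (HS eps He) as [N0 HN0].
  exists (N0 + 2)%nat. intros L HL.
  assert (E := Series_incr_n v (L - 1) ltac:(lia) hc).
  rewrite (Series_ext (fun k => v (L - 1 + k)%nat) (fun j => Rabs (c (L + j)%nat))) in E.
  2:{ intros j. unfold v. f_equal. f_equal. lia. }
  specialize (HN0 (Init.Nat.pred (L - 1)) ltac:(lia)). unfold Rdist in HN0.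
  apply Rabs_def2 in HN0. lra.
Qed.

Lemma approx (N L : nat) (x : R) : (1 <= N)%nat -> (N <= L)%nat ->
  Rabs (tail_sum c N x - tr c N (L - N) x) <= Series (fun j => Rabs (c (L + j)%nat)).
Proof.
  intros HN HNL. unfold tail_sum, tr.
  rewrite (series_split (fun n => c n * phi_star n x) N (L - N)) by (apply (ex_terms N x HN)).
  replace (N + (L - N))%nat with L by lia.
  replace (psum (fun n => c n * phi_star n x) N (L - N) +
    Series (fun j => c (L + j)%nat * phi_star (L + j) x) - psum (fun n => c n * phi_star n x) N (L - N))
    with (Series (fun j => c (L + j)%nat * phi_star (L + j) x)) by ring.
  apply tail_bound. lia.
Qed.

End Tail.

Lemma Cf_unif (f : R -> R) : (forall eps, 0 < eps -> exists g, Cf g /\ forall x, Rabs (f x - g x) <= eps) -> Cf f.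
Proof.
  intros H x0. unfold continuity_pt, continue_in, limit1_in, limit_in.
  intros eps Heps. destruct (H (eps / 3)) as [g [Cg Hg]]. lra.
  destruct (Cg x0 (eps / 3)) as [d [Hd Hgd]]. lra.
  exists d. split; auto. intros x Hx. specialize (Hgd x Hx). simpl in *. unfold R_dist in *.
  pose proof (Hg x). pose proof (Hg x0).
  apply Rabs_le_between in H0. apply Rabs_le_between in H1. apply Rabs_def2 in Hgd.
  apply Rabs_def1; lra.
Qed.



Lemma Cf_tail (c : nat -> R) (hc : ex_series (fun k => Rabs (c (S k)))) (N : nat) :
  (1 <= N)%nat -> Cf (tail_sum c N).
Proof.
  intros HN. apply Cf_unif. intros eps He.
  destruct (tail_small c hc eps He) as [L0 HL0].
  exists (tr c N (Nat.max L0 N - N)). split. apply Cf_tr.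
  intros x. eapply Rle_trans. apply approx; auto. lia. apply HL0. lia.
Qed.

Lemma Cf_fold' (F : nat -> R -> R) (d : R -> R) (l : list nat) :
  Cf d -> (forall N, In N l -> Cf (F N)) -> Cf (fun x => fold_right Rmax (d x) (map (fun N => F N x) l)).
Proof.
  intros Hd HF. induction l as [|n l IH]; simpl. auto. apply Cf_max; auto.
  apply HF. simpl; auto. apply IH. intros; apply HF; simpl; auto.
Qed.

Lemma Cf_max_range' (F : nat -> R -> R) (a b : nat) :
  (forall N, (a <= N)%nat -> Cf (F N)) -> Cf (fun x => max_range (fun N => F N x) a b).
Proof.
  intros HF. unfold max_range. apply Cf_fold'. apply HF; lia.
  intros N HN. apply in_seq in HN. apply HF. lia.
Qed.

Lemma max_diff (f g : nat -> R) (a b : nat) (e : R) : (a <= b)%nat ->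
  (forall N, (a <= N <= b)%nat -> Rabs (f N - g N) <= e) -> max_range f a b <= max_range g a b + e.
Proof.
  intros Hab H. destruct (max_range_attained f a b Hab) as [N [HN E]]. rewrite E.
  pose proof (max_range_upper g a b N HN). specialize (H N HN). apply Rabs_le_between in H. lra.
Qed.

Lemma sq_bound (c : nat -> R) (hc : ex_series (fun k => Rabs (c (S k)))) (a k : nat) : (1 <= a)%nat ->
  psum (fun n => c n ^ 2) a k <= Series (fun j => c (a + j)%nat ^ 2).
Proof.
  intros Ha.
  set (B := Series (fun j => Rabs (c (a + j)%nat))).
  assert (Eabs := ex_abs c hc a Ha).
  assert (HB : forall j, Rabs (c (a + j)%nat) <= B).
  { intros j. unfold B. rewrite (series_split (fun n => Rabs (c n)) a j Eabs).
    assert (E2 : ex_series (fun i => Rabs (c (a + j + i)%nat))).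
    { apply (ex_series_incr_n _ j) in Eabs. eapply ex_series_ext; [|exact Eabs]. intros i. simpl. f_equal. f_equal. lia. }
    rewrite Series_incr_1 by auto.
    pose proof (psum_nonneg (fun n => Rabs (c n)) a j (fun n => Rabs_pos _)).
    assert (0 <= Series (fun i => Rabs (c (a + j + S i)%nat))).
    { apply Series_nonneg. intros; apply Rabs_pos. apply ex_series_incr_1 in E2. exact E2. }
    replace (a + j + 0)%nat with (a + j)%nat by lia. lra. }
  assert (Esq : ex_series (fun j => c (a + j)%nat ^ 2)).
  { apply (@ex_series_le R_AbsRing R_CompleteNormedModule _ (fun j => B * Rabs (c (a + j)%nat))).
    - intros n. change (norm ?y) with (Rabs y). rewrite Rabs_right by (apply Rle_ge, pow2_ge_0).
      specialize (HB n). pose proof (Rabs_pos (c (a + n)%nat)).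
      replace (c (a + n)%nat ^ 2) with (Rabs (c (a + n)%nat) * Rabs (c (a + n)%nat)).
      nra. rewrite <- Rabs_mult. rewrite Rabs_right by nra. ring.
    - apply (@ex_series_scal R_AbsRing R_NormedModule B _ Eabs). }
  rewrite (series_split (fun n => c n ^ 2) a k Esq).
  assert (0 <= Series (fun j => c (a + k + j)%nat ^ 2)).
  { apply Series_nonneg. intros; apply pow2_ge_0.
    apply (ex_series_incr_n _ k) in Esq. eapply ex_series_ext; [|exact Esq]. intros i. simpl. rewrite Nat.add_assoc. reflexivity. }
  lra.
Qed.

Lemma eps_arg (I B lam : R) : 0 < B -> (forall eps, 0 < eps -> I <= exp (Rabs lam * eps) * B) -> I <= B.
Proof.
  intros HB H. destruct (Rle_or_lt I B) as [|HI]; auto. exfalso.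
  set (q := I / B). assert (Hq : 1 < q) by (unfold q; apply Rmult_lt_reg_r with B; auto; field_simplify; lra).
  assert (Hl : 0 < ln q) by (rewrite <- ln_1; apply ln_increasing; lra).
  set (eps := ln q / (Rabs lam + 1)).
  assert (He : 0 < eps) by (unfold eps; apply Rdiv_lt_0_compat; pose proof (Rabs_pos lam); lra).
  specialize (H eps He).
  assert (Rabs lam * eps < ln q).
  { unfold eps. pose proof (Rabs_pos lam).
    apply Rmult_lt_reg_r with (Rabs lam + 1). lra. field_simplify; [|lra]. nra. }
  assert (exp (Rabs lam * eps) < q) by (rewrite <- (exp_ln q) by lra; apply exp_increasing; auto).
  assert (exp (Rabs lam * eps) * B < q * B) by (apply Rmult_lt_compat_r; auto).
  assert (q * B = I) by (unfold q; field; lra). lra.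
Qed.

Theorem lemma2p7 (c : nat -> R) (a b : nat) (lam : R)
  (hc : ex_series (fun k => Rabs (c (S k))))
  (ha : (1 <= a)%nat) (hab : (a < b)%nat) :
  RInt (fun x => exp (lam * max_range (fun N => Rabs (tail_sum c N x)) a b)) 0 1
  <= 8 * exp (lam ^ 2 / 2 * Series (fun k => (c (a + k)%nat) ^ 2)).
Proof.
  apply (eps_arg _ _ lam). pose proof (exp_pos (lam ^ 2 / 2 * Series (fun k => c (a + k)%nat ^ 2))). lra.
  intros eps He.
  destruct (tail_small c hc eps He) as [L0 HL0].
  set (L := Nat.max L0 (S b)).
  assert (HbL : (b < L)%nat) by lia.
  set (r := Series (fun j => Rabs (c (L + j)%nat))).
  assert (Hr : r <= eps) by (apply HL0; lia).
  assert (CT : Cf (fun x => exp (lam * max_range (fun N => Rabs (tail_sum c N x)) a b))).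
  { apply Cf_exp, Cf_mult. apply Cf_const.
    apply (Cf_max_range' (fun N x => Rabs (tail_sum c N x))). intros N HN. apply Cf_abs, Cf_tail; auto. lia. }
  set (G := fun x => exp (lam * max_range (fun N => Rabs (tr c N (L - N) x)) a b)).
  assert (CG : Cf G).
  { apply Cf_exp, Cf_mult. apply Cf_const.
    apply (Cf_max_range (fun N x => Rabs (tr c N (L - N) x))). intros N. apply Cf_abs, Cf_tr. }
  apply Rle_trans with (RInt (fun x => exp (Rabs lam * eps) * G x) 0 1).
  - apply RInt_le. lra. apply Cf_ex_RInt; auto. apply Cf_ex_RInt. apply Cf_mult; auto. apply Cf_const.
    intros x _. unfold G. rewrite <- exp_plus. apply exp_le.
    assert (D : forall N, (a <= N <= b)%nat ->
      Rabs (Rabs (tail_sum c N x) - Rabs (tr c N (L - N) x)) <= eps).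
    { intros N HN. eapply Rle_trans. apply Rabs_triang_inv2. eapply Rle_trans. apply approx; auto. lia. lia. auto. }
    assert (D1 := max_diff (fun N => Rabs (tail_sum c N x)) (fun N => Rabs (tr c N (L - N) x)) a b eps ltac:(lia) D).
    assert (D2 : forall N, (a <= N <= b)%nat ->
      Rabs (Rabs (tr c N (L - N) x) - Rabs (tail_sum c N x)) <= eps).
    { intros N HN. rewrite Rabs_minus_sym. auto. }
    assert (D3 := max_diff (fun N => Rabs (tr c N (L - N) x)) (fun N => Rabs (tail_sum c N x)) a b eps ltac:(lia) D2).
    simpl in D1, D3.
    set (MT := max_range (fun N => Rabs (tail_sum c N x)) a b) in *.
    set (ML := max_range (fun N => Rabs (tr c N (L - N) x)) a b) in *.
    destruct (Rle_or_lt 0 lam) as [Hl|Hl].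
    + rewrite Rabs_right by lra. assert (lam * (MT - ML - eps) <= 0) by nra. nra.
    + rewrite Rabs_left by lra. assert (lam * (ML - MT - eps) >= 0) by nra. nra.
  - rewrite RInt_scal_l by auto. apply Rmult_le_compat_l. apply Rlt_le, exp_pos.
    eapply Rle_trans. apply trunc_main; auto. lia.
    apply Rmult_le_compat_l. lra. apply exp_le. apply Rmult_le_compat_l.
    pose proof (pow2_ge_0 lam). lra. apply sq_bound; auto.
Qed.
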